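(* Let $p \geq 5$ and let $L$ be the Laplacian of the graph $C_\infty \oplus K_p \oplus C_\infty$. Let $E_K \subset l^2$ be the span of the vectors $e_{-1}-e_{-k}$, $k=2,\ldots,p-2$ (equivalently, the $v \in l^2$ supported on $\{-p+2,\ldots,-1\}$ with entries summing to $0$), and $E_K^\perp$ its orthogonal complement. For $\lambda > 4$ let $\sigma_+ = \sigma_+(\lambda) = \tfrac12[(2-\lambda)+\sqrt{(2-\lambda)^2-4}]$ and $$F_S(\lambda) = (2-\lambda)\sigma_+ - (p-1-\lambda)(2-\lambda) + 2(p-2), \qquad F_A(\lambda) = \sigma_+ - (p+1-\lambda).$$ Then: (i) every eigenvector $v \in l^2 \cap E_K^\perp$ of $L$ with eigenvalue $\lambda > 4$ is either symmetric or antisymmetric; (ii) $\lambda > 4$ is the eigenvalue of a symmetric eigenvector $v \in l^2 \cap E_K^\perp$ of $L$ if and only if $F_S(\lambda) = 0$; (iii) $\lambda > 4$ is the eigenvalue of an antisymmetric eigenvector $v \in l^2 \cap E_K^\perp$ of $L$ if and only if $F_A(\lambda)=0$; (iv) each of the equations $F_A(\lambda)=0$ and $F_S(\lambda)=0$ has exactly one solution in $(p,p+2)$ and no solutions in $(4,p] \cup [p+2,+\infty)$.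
   Context: The graph $C_\infty \oplus K_p \oplus C_\infty$ has vertex set $\mathbb{Z}$; its edges are every pair of distinct vertices in $\{-p+1,\ldots,0\}$, the edges $\{j,j+1\}$ for all $j \leq -p$, and the edges $\{j,j+1\}$ for all $j \geq 0$. $l^2$ is the real Hilbert space of square-summable real sequences indexed by $\mathbb{Z}$, with the standard inner product; $e_j$ is the indicator vector of $j$. The Laplacian acts by $(Lv)_i = \deg(i)\, v_i - \sum_{j \sim i} v_j$. A vector $v$ is symmetric if $v_{-p+1-n} = v_n$ for all integers $n \geq 0$, and antisymmetric if $v_{-p+1-n} = -v_n$ for all integers $n \geq 0$ (i.e. invariant, resp. anti-invariant, under the reflection $j \mapsto -p+1-j$ of the graph). *)

(* Defs.v *)
From Stdlib Require Import Reals Lra Lia ZArith List.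
From Coquelicot Require Import Coquelicot.
Import ListNotations.
Open Scope R_scope.

Definition vec := Z -> R.

(* Graph C_oo (+) K_p (+) C_oo on vertex set Z. *)
Definition adj (p : nat) (i j : Z) : bool :=
  let P := Z.of_nat p in
  negb (Z.eqb i j) &&
  ( ((-P + 1 <=? i)%Z && (i <=? 0)%Z && (-P + 1 <=? j)%Z && (j <=? 0)%Z)
  || ((Z.eqb (Z.abs (i - j)) 1) && (Z.min i j <=? -P)%Z)
  || ((Z.eqb (Z.abs (i - j)) 1) && (0 <=? Z.min i j)%Z) ).

(* All neighbours of i lie in the window [i-p, i+p]. *)
Definition window (p : nat) (i : Z) : list Z :=
  map (fun k => (i - Z.of_nat p + Z.of_nat k)%Z) (seq 0 (2 * p + 1)).

Definition deg (p : nat) (i : Z) : nat := length (filter (adj p i) (window p i)).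

Definition nbsum (p : nat) (v : vec) (i : Z) : R :=
  fold_right Rplus 0 (map (fun j => if adj p i j then v j else 0) (window p i)).

Definition Lap (p : nat) (v : vec) (i : Z) : R := INR (deg p i) * v i - nbsum p v i.

Definition in_l2 (v : vec) : Prop :=
  ex_series (fun n : nat => (v (Z.of_nat n))^2) /\
  ex_series (fun n : nat => (v (- Z.of_nat n - 1)%Z)^2).

Definition ip (u v : vec) : R :=
  Series (fun n : nat => u (Z.of_nat n) * v (Z.of_nat n)) +
  Series (fun n : nat => u (- Z.of_nat n - 1)%Z * v (- Z.of_nat n - 1)%Z).

Definition e (j : Z) : vec := fun i => if Z.eqb i j then 1 else 0.

Definition EK (p : nat) (w : vec) : Prop :=
  exists c : nat -> R, forall j : Z,
    w j = fold_right Rplus 0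
            (map (fun k => c k * (e (-1)%Z j - e (- Z.of_nat k)%Z j)) (seq 2 (p - 3))).

Definition in_EKperp (p : nat) (v : vec) : Prop :=
  in_l2 v /\ forall w, EK p w -> ip v w = 0.

Definition is_eigvec (p : nat) (v : vec) (lam : R) : Prop :=
  in_l2 v /\ (exists i, v i <> 0) /\ forall i, Lap p v i = lam * v i.

Definition symmetric (p : nat) (v : vec) : Prop :=
  forall n : Z, (0 <= n)%Z -> v (- Z.of_nat p + 1 - n)%Z = v n.

Definition antisymmetric (p : nat) (v : vec) : Prop :=
  forall n : Z, (0 <= n)%Z -> v (- Z.of_nat p + 1 - n)%Z = - v n.

Definition sigma_plus (lam : R) : R := ((2 - lam) + sqrt ((2 - lam)^2 - 4)) / 2.

Definition F_S (p : nat) (lam : R) : R :=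
  (2 - lam) * sigma_plus lam - (INR p - 1 - lam) * (2 - lam) + 2 * (INR p - 2).

Definition F_A (p : nat) (lam : R) : R := sigma_plus lam - (INR p + 1 - lam).

(* Main.v *)
Require Import Defs.
From Stdlib Require Import Reals Lra Lia ZArith List.
From Coquelicot Require Import Coquelicot.
Import ListNotations.
Open Scope R_scope.

Definition sumL (l : list Z) (f : Z -> R) : R := fold_right Rplus 0 (map f l).

Lemma sumL_ext_in l f g : (forall j, In j l -> f j = g j) -> sumL l f = sumL l g.
Proof.
  induction l as [|x l IH]; intros H; simpl; [reflexivity|].
  unfold sumL in *; simpl. rewrite H by (left; reflexivity).
  rewrite IH by (intros; apply H; right; assumption). reflexivity.
Qed.

Lemma sumL_app l1 l2 f : sumL (l1 ++ l2) f = sumL l1 f + sumL l2 f.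
Proof. induction l1; unfold sumL in *; simpl; [lra|]. rewrite IHl1; lra. Qed.

Lemma sumL_plus l f g : sumL l (fun j => f j + g j) = sumL l f + sumL l g.
Proof. induction l; unfold sumL in *; simpl; [lra|]. rewrite IHl; lra. Qed.

Lemma sumL_const l x : sumL l (fun _ => x) = INR (length l) * x.
Proof. induction l; unfold sumL in *; cbn [length map fold_right]; [simpl; lra|]. rewrite IHl, S_INR; lra. Qed.

Definition W (a : Z) (n : nat) : list Z := map (fun k => (a + Z.of_nat k)%Z) (seq 0 n).

Lemma In_W a n j : In j (W a n) <-> (a <= j < a + Z.of_nat n)%Z.
Proof.
  unfold W. rewrite in_map_iff. split.
  - intros [k [Hk Hin]]. apply in_seq in Hin. lia.
  - intros H. exists (Z.to_nat (j - a)). split; [lia|]. apply in_seq. lia.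
Qed.

Lemma map_seq_shift a n m : map (fun k => (a + Z.of_nat k)%Z) (seq n m) = map (fun k => (a + Z.of_nat n + Z.of_nat k)%Z) (seq 0 m).
Proof.
  revert n a. induction m; intros n a; [reflexivity|]. simpl. f_equal; [lia|].
  rewrite IHm. rewrite <- seq_shift, map_map. apply map_ext. intros; lia.
Qed.

Lemma W_app a n m : W a (n + m) = W a n ++ W (a + Z.of_nat n) m.
Proof.
  unfold W. rewrite seq_app, map_app. f_equal. simpl. apply map_seq_shift.
Qed.

Definition Rng (lo hi : Z) (x : R) : Z -> R := fun j => if ((lo <=? j)%Z && (j <=? hi)%Z)%bool then x else 0.

Lemma sumL_zero l f : (forall j, In j l -> f j = 0) -> sumL l f = 0.
Proof. intros H. rewrite (sumL_ext_in l f (fun _ => 0)) by assumption. rewrite sumL_const; lra. Qed.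

Lemma sum_W_range a n lo hi x : (a <= lo)%Z -> (lo <= hi+1)%Z -> (hi + 1 <= a + Z.of_nat n)%Z ->
  sumL (W a n) (Rng lo hi x) = IZR (hi-lo+1) * x.
Proof.
  intros H1 H2 H3.
  replace n with (Z.to_nat (lo - a) + (Z.to_nat (hi - lo + 1) + (n - Z.to_nat (lo - a) - Z.to_nat (hi-lo+1))))%nat by lia.
  rewrite !W_app, !sumL_app.
  rewrite (sumL_zero (W a _)). 2:{ intros j Hj; apply In_W in Hj; unfold Rng.
    destruct (Z.leb_spec lo j); [lia|reflexivity]. }
  rewrite (sumL_zero (W (_ + _) (_ - _ - _))). 2:{ intros j Hj; apply In_W in Hj; unfold Rng.
    destruct (Z.leb_spec j hi); [lia|]. rewrite Bool.andb_false_r; reflexivity. }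
  rewrite (sumL_ext_in _ _ (fun _ => x)). 2:{ intros j Hj; apply In_W in Hj; unfold Rng.
    destruct (Z.leb_spec lo j); [|lia]. destruct (Z.leb_spec j hi); [|lia]. reflexivity. }
  rewrite sumL_const. unfold W. rewrite length_map, length_seq, INR_IZR_INZ, Z2Nat.id by lia. lra.
Qed.

Lemma filter_aux (P : Z -> bool) (l : list Z) x f :
  INR (length (filter P l)) * x - fold_right Rplus 0 (map (fun j => if P j then f j else 0) l)
  = sumL l (fun j => if P j then x - f j else 0).
Proof.
  induction l as [|a l IH]; unfold sumL in *; simpl; [lra|].
  destruct (P a); cbn [length]; [rewrite S_INR|]; rewrite <- IH; lra.
Qed.

Lemma Lap_eq p v i : Lap p v i = sumL (window p i) (fun j => if adj p i j then v i - v j else 0).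
Proof. unfold Lap, deg, nbsum. apply filter_aux. Qed.

Lemma window_W p i : window p i = W (i - Z.of_nat p) (2 * p + 1).
Proof. reflexivity. Qed.

Lemma sum_W_point a n b x : (a <= b)%Z -> (b + 1 <= a + Z.of_nat n)%Z -> sumL (W a n) (Rng b b x) = x.
Proof. intros. rewrite sum_W_range by lia. replace (b - b + 1)%Z with 1%Z by ring. simpl; lra. Qed.

Ltac zb j := repeat (match goal with
 | |- context [Z.eqb ?x ?y] => destruct (Z.eqb_spec x y)
 | |- context [Z.leb ?x ?y] => destruct (Z.leb_spec x y)
 end; simpl; try (exfalso; lia)); try lra; try (subst; lra);
 try (match goal with |- context [?f ?k] => (assert (HH: j = k) by lia; rewrite HH; lra) end).

Lemma Lap_pos p v i : (5 <= p)%nat -> (1 <= i)%Z -> Lap p v i = (v i - v (i-1)%Z) + (v i - v (i+1)%Z).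
Proof.
  intros Hp Hi. rewrite Lap_eq.
  rewrite (sumL_ext_in _ _ (fun j => Rng (i-1) (i-1) (v i - v (i-1)%Z) j + Rng (i+1) (i+1) (v i - v (i+1)%Z) j)).
  - rewrite sumL_plus, window_W, !sum_W_point by lia. reflexivity.
  - intros j _. unfold adj, Rng. zb j.
Qed.

Lemma Lap_neg p v i : (5 <= p)%nat -> (i <= - Z.of_nat p)%Z -> Lap p v i = (v i - v (i-1)%Z) + (v i - v (i+1)%Z).
Proof.
  intros Hp Hi. rewrite Lap_eq.
  rewrite (sumL_ext_in _ _ (fun j => Rng (i-1) (i-1) (v i - v (i-1)%Z) j + Rng (i+1) (i+1) (v i - v (i+1)%Z) j)).
  - rewrite sumL_plus, window_W, !sum_W_point by lia. reflexivity.
  - intros j _. unfold adj, Rng. zb j.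
Qed.

Lemma IZR_Pm2 p : IZR (-1 - (- Z.of_nat p + 2) + 1) = INR p - 2.
Proof. replace (-1 - (- Z.of_nat p + 2) + 1)%Z with (Z.of_nat p - 2)%Z by lia. rewrite minus_IZR, <- INR_IZR_INZ. reflexivity. Qed.

Lemma Lap_0 p v c : (5 <= p)%nat -> (forall j, (- Z.of_nat p + 2 <= j <= -1)%Z -> v j = c) ->
  Lap p v 0%Z = (v 0%Z - v 1%Z) + (v 0%Z - v (- Z.of_nat p + 1)%Z) + (INR p - 2) * (v 0%Z - c).
Proof.
  intros Hp Hc. rewrite Lap_eq.
  rewrite (sumL_ext_in _ _ (fun j => Rng 1 1 (v 0%Z - v 1%Z) j + Rng (- Z.of_nat p + 1) (- Z.of_nat p + 1) (v 0%Z - v (- Z.of_nat p + 1)%Z) j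
     + Rng (- Z.of_nat p + 2) (-1) (v 0%Z - c) j)).
  - rewrite !sumL_plus, window_W, !sum_W_point, sum_W_range, IZR_Pm2 by lia. reflexivity.
  - intros j _. unfold adj, Rng. zb j. all: rewrite (Hc j) by lia; lra.
Qed.

Lemma Lap_1 p v c : (5 <= p)%nat -> (forall j, (- Z.of_nat p + 2 <= j <= -1)%Z -> v j = c) ->
  Lap p v (- Z.of_nat p + 1)%Z = (v (- Z.of_nat p + 1)%Z - v (- Z.of_nat p)%Z) + (v (- Z.of_nat p + 1)%Z - v 0%Z)
    + (INR p - 2) * (v (- Z.of_nat p + 1)%Z - c).
Proof.
  intros Hp Hc. rewrite Lap_eq.
  rewrite (sumL_ext_in _ _ (fun j => Rng (- Z.of_nat p) (- Z.of_nat p) (v (- Z.of_nat p + 1)%Z - v (- Z.of_nat p)%Z) j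
     + Rng 0 0 (v (- Z.of_nat p + 1)%Z - v 0%Z) j
     + Rng (- Z.of_nat p + 2) (-1) (v (- Z.of_nat p + 1)%Z - c) j)).
  - rewrite !sumL_plus, window_W, !sum_W_point, sum_W_range, IZR_Pm2 by lia. reflexivity.
  - intros j _. unfold adj, Rng. zb j. all: rewrite (Hc j) by lia; lra.
Qed.

Lemma Lap_int p v c i : (5 <= p)%nat -> (forall j, (- Z.of_nat p + 2 <= j <= -1)%Z -> v j = c) ->
  (- Z.of_nat p + 2 <= i <= -1)%Z ->
  Lap p v i = (c - v 0%Z) + (c - v (- Z.of_nat p + 1)%Z).
Proof.
  intros Hp Hc Hi. rewrite Lap_eq.
  rewrite (sumL_ext_in _ _ (fun j => Rng 0 0 (c - v 0%Z) j + Rng (- Z.of_nat p + 1) (- Z.of_nat p + 1) (c - v (- Z.of_nat p + 1)%Z) j)).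
  - rewrite !sumL_plus, window_W, !sum_W_point by lia. reflexivity.
  - intros j _. rewrite (Hc i) by lia. unfold adj, Rng. zb j. all: rewrite (Hc j) by lia; lra.
Qed.


Lemma sum_n_delta m r n : sum_n (fun k => if Nat.eqb k m then r else 0) n = if Nat.leb m n then r else 0.
Proof.
  induction n.
  - rewrite sum_O. destruct m; simpl; reflexivity.
  - rewrite sum_Sn, IHn.
    destruct (Nat.leb_spec m n), (Nat.leb_spec m (S n)), (Nat.eqb_spec (S n) m); try lia; unfold plus; simpl; lra.
Qed.

Lemma is_series_delta m r : is_series (fun k => if Nat.eqb k m then r else 0) r.
Proof.
  change (is_lim_seq (sum_n (fun k => if Nat.eqb k m then r else 0)) r).
  apply is_lim_seq_ext_loc with (fun _ => r); [|apply is_lim_seq_const].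
  exists m. intros n Hn. rewrite sum_n_delta. destruct (Nat.leb_spec m n); [reflexivity|lia].
Qed.

Lemma is_series_zero : is_series (fun _ : nat => 0) 0.
Proof. apply is_series_ext with (fun k => if Nat.eqb k 0 then 0 else 0); [intros; destruct Nat.eqb; reflexivity|apply is_series_delta]. Qed.

Lemma e_neg v k n : (1 <= k)%nat ->
  v (- Z.of_nat n - 1)%Z * e (- Z.of_nat k)%Z (- Z.of_nat n - 1)%Z = if Nat.eqb n (k-1) then v (- Z.of_nat k)%Z else 0.
Proof.
  intros Hk. unfold e. destruct (Z.eqb_spec (- Z.of_nat n - 1) (- Z.of_nat k)), (Nat.eqb_spec n (k-1)); try lia.
  - replace (- Z.of_nat n - 1)%Z with (- Z.of_nat k)%Z by lia. lra.
  - lra.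
Qed.

Definition wL (c : nat -> R) (L : list nat) (j : Z) : R :=
  fold_right Rplus 0 (map (fun k => c k * (e (-1)%Z j - e (- Z.of_nat k)%Z j)) L).

Lemma wL_pos c L n : (forall k, In k L -> (1 <= k)%nat) -> wL c L (Z.of_nat n) = 0.
Proof.
  induction L; intros HL; unfold wL in *; simpl; [reflexivity|]. rewrite IHL by (intros; apply HL; right; auto). unfold e.
  destruct (Z.eqb_spec (Z.of_nat n) (-1)); [lia|]. destruct (Z.eqb_spec (Z.of_nat n) (- Z.of_nat a)); [|lra].
  specialize (HL a (or_introl eq_refl)). lia.
Qed.

Lemma wL_neg v c L : (forall k, In k L -> (1 <= k)%nat) ->
  is_series (fun n => v (- Z.of_nat n - 1)%Z * wL c L (- Z.of_nat n - 1)%Z)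
    (fold_right Rplus 0 (map (fun k => c k * (v (-1)%Z - v (- Z.of_nat k)%Z)) L)).
Proof.
  induction L as [|k L IH]; intros HL; simpl.
  - apply is_series_ext with (fun _ => 0); [intros; unfold wL; simpl; lra|apply is_series_zero].
  - pose proof (is_series_delta (1-1) (v (- Z.of_nat 1)%Z)) as H1.
    pose proof (is_series_delta (k-1) (v (- Z.of_nat k)%Z)) as H2.
    assert (H3 := IH (fun k0 H => HL k0 (or_intror H))).
    pose proof (is_series_plus _ _ _ _ (is_series_scal (c k) _ _ (is_series_plus _ _ _ _ H1 (is_series_scal (-1) _ _ H2))) H3) as H4.
    unfold plus, scal in H4; simpl in H4; unfold mult in H4; simpl in H4.
    match type of H4 with is_series _ ?l => match goal with |- is_series _ ?V => replace V with l by ring end end.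
    eapply is_series_ext; [|exact H4]. intros n. cbv beta.
    rewrite <- (e_neg v k n) by (apply HL; left; reflexivity).
    change (if (n =? 0)%nat then v (-1)%Z else 0) with (if (n =? 1 - 1)%nat then v (- Z.of_nat 1)%Z else 0).
    rewrite <- (e_neg v 1 n) by lia. unfold wL; simpl. ring.
Qed.

Lemma ip_wL v c L : (forall k, In k L -> (1 <= k)%nat) ->
  ip v (wL c L) = fold_right Rplus 0 (map (fun k => c k * (v (-1)%Z - v (- Z.of_nat k)%Z)) L).
Proof.
  intros HL. unfold ip.
  rewrite (is_series_unique (fun n => v (Z.of_nat n) * wL c L (Z.of_nat n)) 0).
  2:{ apply is_series_ext with (fun _ => 0); [|apply is_series_zero]. intros n; cbv beta. rewrite wL_pos by assumption. rewrite Rmult_0_r; reflexivity. }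
  rewrite (is_series_unique _ _ (wL_neg v c L HL)). ring.
Qed.

Lemma fold_delta (f : nat -> R) k s n :
  fold_right Rplus 0 (map (fun m => (if Nat.eqb m k then 1 else 0) * f m) (seq s n))
  = if (Nat.leb s k && Nat.ltb k (s + n))%bool then f k else 0.
Proof.
  revert s. induction n; intros s; simpl.
  - destruct (Nat.leb_spec s k), (Nat.ltb_spec k (s+0)); simpl; try lia; reflexivity.
  - rewrite IHn. destruct (Nat.eqb_spec s k), (Nat.leb_spec s k), (Nat.ltb_spec k (s + S n)),
      (Nat.leb_spec (S s) k), (Nat.ltb_spec k (S s + n)); simpl; try lia; subst; ring.
Qed.

Lemma fold_zero (g : nat -> R) L : (forall k, In k L -> g k = 0) -> fold_right Rplus 0 (map g L) = 0.
Proof. induction L; intros H; simpl; [reflexivity|]. rewrite H by (left; auto). rewrite IHL by (intros; apply H; right; auto). ring. Qed.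

Lemma ip_EK p v w c0 : (forall j, (- Z.of_nat p + 2 <= j <= -1)%Z -> v j = c0) -> EK p w -> ip v w = 0.
Proof.
  intros Hc [c Hw].
  assert (HL : forall k, In k (seq 2 (p-3)) -> (1 <= k)%nat) by (intros k Hk; apply in_seq in Hk; lia).
  assert (E : ip v w = ip v (wL c (seq 2 (p-3)))).
  { unfold ip. f_equal; apply Series_ext; intros n; rewrite Hw; reflexivity. }
  rewrite E, ip_wL by assumption. apply fold_zero. intros k Hk. apply in_seq in Hk.
  rewrite !Hc by lia. ring.
Qed.

Lemma EK_delta p k : (2 <= k <= p - 2)%nat -> EK p (fun j => e (-1)%Z j - e (- Z.of_nat k)%Z j).
Proof.
  intros Hk. exists (fun m => if Nat.eqb m k then 1 else 0). intros j.
  rewrite (fold_delta (fun m => e (-1)%Z j - e (- Z.of_nat m)%Z j)).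
  destruct (Nat.leb_spec 2 k), (Nat.ltb_spec k (2 + (p-3))); simpl; try lia; reflexivity.
Qed.

Lemma ip_delta p v k : (2 <= k <= p - 2)%nat -> ip v (fun j => e (-1)%Z j - e (- Z.of_nat k)%Z j) = v (-1)%Z - v (- Z.of_nat k)%Z.
Proof.
  intros Hk.
  assert (HL : forall m, In m (seq 2 (p-3)) -> (1 <= m)%nat) by (intros m Hm; apply in_seq in Hm; lia).
  assert (E : ip v (fun j => e (-1)%Z j - e (- Z.of_nat k)%Z j) = ip v (wL (fun m => if Nat.eqb m k then 1 else 0) (seq 2 (p-3)))).
  { unfold ip. f_equal; apply Series_ext; intros n; unfold wL;
    rewrite (fold_delta (fun m => e (-1)%Z _ - e (- Z.of_nat m)%Z _));
    destruct (Nat.leb_spec 2 k), (Nat.ltb_spec k (2 + (p-3))); simpl; try lia; reflexivity. }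
  rewrite E, ip_wL by assumption.
  rewrite (fold_delta (fun m => v (-1)%Z - v (- Z.of_nat m)%Z)).
  destruct (Nat.leb_spec 2 k), (Nat.ltb_spec k (2 + (p-3))); simpl; try lia; reflexivity.
Qed.


Lemma sigma_facts lam : 4 < lam ->
  (sigma_plus lam)^2 - (2 - lam) * sigma_plus lam + 1 = 0 /\ -1 < sigma_plus lam < 0.
Proof.
  intros H. unfold sigma_plus.
  set (D := (2 - lam)^2 - 4).
  assert (HD : 0 < D) by (unfold D; nra).
  pose proof (sqrt_sqrt D (Rlt_le _ _ HD)) as Hs.
  pose proof (sqrt_pos D) as Hp.
  set (r := sqrt D) in *.
  split.
  { replace ((((2 - lam) + r) / 2)^2 - (2 - lam) * (((2 - lam) + r) / 2) + 1) with ((r * r - D) / 4) by (unfold D; field).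
    rewrite Hs. field. }
  split.
  - assert (lam - 4 < r). { apply Rnot_le_lt; intros Hc. assert (r * r <= (lam - 4) * (lam - 4)) by (apply Rmult_le_compat; lra). unfold D in *. nra. }
    lra.
  - assert (r < lam - 2). { apply Rnot_le_lt; intros Hc. assert ((lam - 2) * (lam - 2) <= r * r) by (apply Rmult_le_compat; lra). unfold D in *. nra. }
    lra.
Qed.

Lemma sq_lt_abs x e : 0 < e -> x^2 < e^2 -> Rabs x < e.
Proof. intros. destruct (Rcase_abs x); [rewrite Rabs_left by lra|rewrite Rabs_right by lra]; nra. Qed.

Lemma lim_from_sq (u : nat -> R) : is_lim_seq (fun n => (u n)^2) 0 -> is_lim_seq u 0.
Proof.
  intros H. apply is_lim_seq_spec in H. apply is_lim_seq_spec. intros eps.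
  assert (He : 0 < eps^2) by (pose proof (cond_pos eps); nra).
  destruct (H (mkposreal _ He)) as [N HN]. exists N. intros n Hn. specialize (HN n Hn). simpl in HN.
  rewrite Rminus_0_r in *. apply sq_lt_abs; [apply cond_pos|].
  rewrite Rabs_right in HN; [lra|]. apply Rle_ge. apply pow2_ge_0.
Qed.

Lemma tail (u : nat -> R) s t : s^2 - t * s + 1 = 0 -> -1 < s < 0 ->
  (forall n, u (S (S n)) = t * u (S n) - u n) -> is_lim_seq (fun n => (u n)^2) 0 ->
  forall n, u n = u 0%nat * s^n.
Proof.
  intros Hs Hb Hrec Hl.
  set (s' := t - s).
  assert (Hss : s * s' = 1) by (unfold s'; nra).
  assert (Hs' : 1 < Rabs s').
  { rewrite Rabs_left; [|unfold s'; nra]. nra. }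
  set (w := fun n => u (S n) - s * u n).
  assert (Hw : forall n, w n = s'^n * w 0%nat).
  { induction n; [simpl; ring|]. 
    replace (w (S n)) with (s' * w n) by (unfold w; rewrite Hrec; unfold s' in *; apply Rminus_diag_uniq; match goal with |- ?L = 0 => replace L with (u n * (s^2 - t*s + 1)) by ring end; rewrite Hs; ring).
    rewrite IHn; simpl; ring. }
  assert (Hu : is_lim_seq u 0) by (apply lim_from_sq; assumption).
  assert (Hwl : is_lim_seq w 0).
  { assert (H1 : is_lim_seq (fun n => u (S n)) 0) by (apply (is_lim_seq_incr_1 u 0); assumption).
    assert (H2 : is_lim_seq (fun n => s * u n) 0).
    { replace (Finite 0) with (Rbar_mult s 0) by (simpl; f_equal; ring). apply is_lim_seq_scal_l; assumption. }
    pose proof (is_lim_seq_minus' _ _ _ _ H1 H2) as H3. rewrite Rminus_0_r in H3. exact H3. }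
  assert (Hw0 : w 0%nat = 0).
  { destruct (Req_dec (w 0%nat) 0) as [|Hne]; [assumption|exfalso].
    apply is_lim_seq_spec in Hwl.
    assert (Hp : 0 < Rabs (w 0%nat)) by (apply Rabs_pos_lt; assumption).
    destruct (Hwl (mkposreal _ Hp)) as [N HN]. specialize (HN N (le_n N)). simpl in HN.
    rewrite Rminus_0_r, Hw, Rabs_mult, <- RPow_abs in HN.
    assert (1 <= Rabs s' ^ N) by (apply pow_R1_Rle; lra). nra. }
  induction n; [simpl; ring|].
  assert (E : w n = 0) by (rewrite Hw, Hw0; ring).
  unfold w in E. simpl. rewrite <- Rmult_assoc, (Rmult_comm (u 0%nat) s), Rmult_assoc, <- IHn. lra.
Qed.


Lemma INR_p5 p : (5 <= p)%nat -> 5 <= INR p.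
Proof. intros. replace 5 with (INR 5) by (simpl; ring). apply le_INR; assumption. Qed.

Definition lamA (p : nat) : R := INR p + 1 + 1 / (INR p - 1).

Lemma FA_root p lam : (5 <= p)%nat -> 4 < lam -> F_A p lam = 0 -> lam = lamA p.
Proof.
  intros Hp Hl HF. pose proof (INR_p5 p Hp) as HP. destruct (sigma_facts lam Hl) as [Hq Hb].
  unfold F_A in HF. set (s := sigma_plus lam) in *.
  assert (Hlam : lam = INR p + 1 - s) by lra. rewrite Hlam in Hq.
  assert (Hs : (INR p - 1) * s + 1 = 0) by nra.
  assert (s = - 1 / (INR p - 1)) by (field_simplify_eq; [lra|lra]).
  unfold lamA. rewrite Hlam, H. field. lra.
Qed.

Lemma FA_at p : (5 <= p)%nat -> F_A p (lamA p) = 0.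
Proof.
  intros Hp. pose proof (INR_p5 p Hp) as HP.
  assert (Hl : 4 < lamA p).
  { unfold lamA. assert (0 < 1 / (INR p - 1)) by (apply Rdiv_lt_0_compat; lra). lra. }
  destruct (sigma_facts _ Hl) as [Hq Hb]. set (s := sigma_plus (lamA p)) in *.
  assert (Hf : (s + 1 / (INR p - 1)) * (s + (INR p - 1)) = 0).
  { rewrite <- Hq. unfold lamA. field. lra. }
  apply Rmult_integral in Hf. destruct Hf as [Hf|Hf]; [|lra].
  unfold F_A. fold s. unfold lamA. replace s with (- (1 / (INR p - 1))) by lra. field. lra.
Qed.

Lemma sigma_strict l1 l2 : 4 < l1 -> l1 < l2 -> sigma_plus l1 < sigma_plus l2.
Proof.
  intros H1 H2. destruct (sigma_facts l1 H1) as [E1 B1]. destruct (sigma_facts l2 ltac:(lra)) as [E2 B2].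
  set (s1 := sigma_plus l1) in *. set (s2 := sigma_plus l2) in *.
  assert (Hid : s1 * s2 * ((2 - l1) - (2 - l2)) = (s1 - s2) * (s1 * s2 - 1)).
  { apply Rminus_diag_uniq.
    match goal with |- ?L = 0 => replace L with (s1 * (s2^2 - (2 - l2) * s2 + 1) - s2 * (s1^2 - (2 - l1) * s1 + 1)) by ring end.
    rewrite E1, E2. ring. }
  assert (Hp : 0 < s1 * s2) by nra. assert (Hq : s1 * s2 < 1) by nra.
  assert (0 < s1 * s2 * ((2 - l1) - (2 - l2))) by (apply Rmult_lt_0_compat; lra).
  rewrite Hid in H. nra.
Qed.

Definition kS (p : nat) (lam : R) : R := sigma_plus lam - (INR p - 1 - lam) - 2 * (INR p - 2) / (lam - 2).

Lemma FS_kS p lam : 2 < lam -> F_S p lam = (2 - lam) * kS p lam.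
Proof. intros. unfold F_S, kS. field. lra. Qed.

Lemma kS_strict p l1 l2 : (5 <= p)%nat -> 4 < l1 -> l1 < l2 -> kS p l1 < kS p l2.
Proof.
  intros Hp H1 H2. pose proof (INR_p5 p Hp). pose proof (sigma_strict l1 l2 H1 H2). unfold kS.
  assert (2 * (INR p - 2) / (l2 - 2) < 2 * (INR p - 2) / (l1 - 2)).
  { unfold Rdiv. apply Rmult_lt_compat_l; [lra|]. apply Rinv_lt_contravar; nra. }
  lra.
Qed.

Lemma kS_p p : (5 <= p)%nat -> kS p (INR p) < 0.
Proof.
  intros Hp. pose proof (INR_p5 p Hp). destruct (sigma_facts (INR p) ltac:(lra)) as [_ B].
  unfold kS. replace (2 * (INR p - 2) / (INR p - 2)) with 2 by (field; lra). lra.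
Qed.

Lemma kS_p2 p : (5 <= p)%nat -> 0 < kS p (INR p + 2).
Proof.
  intros Hp. pose proof (INR_p5 p Hp). destruct (sigma_facts (INR p + 2) ltac:(lra)) as [_ B].
  unfold kS. replace (INR p + 2 - 2) with (INR p) by ring.
  assert (2 * (INR p - 2) / INR p < 2) by (apply Rmult_lt_reg_r with (INR p); [lra|]; unfold Rdiv; rewrite Rmult_assoc, Rinv_l by lra; lra).
  lra.
Qed.

Lemma kS_exists p : (5 <= p)%nat -> exists lam, INR p < lam < INR p + 2 /\ F_S p lam = 0.
Proof.
  intros Hp. pose proof (INR_p5 p Hp). pose proof (kS_p p Hp). pose proof (kS_p2 p Hp).
  destruct (Ranalysis5.IVT_interv (fun x => - F_S p x) (INR p) (INR p + 2)) as [z [Hz Hf]].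
  - intros a Ha. unfold F_S, sigma_plus. reg. nra.
  - lra.
  - rewrite FS_kS by lra. nra.
  - rewrite FS_kS by lra. nra.
  - exists z. assert (F_S p z = 0) by lra. split; [|assumption].
    destruct (Req_dec z (INR p)) as [E|E]; [rewrite E, FS_kS in H2 by lra; nra|].
    destruct (Req_dec z (INR p + 2)) as [E'|E']; [rewrite E', FS_kS in H2 by lra; nra|].
    lra.
Qed.

Lemma FS_zero_kS p lam : 4 < lam -> F_S p lam = 0 -> kS p lam = 0.
Proof. intros H1 H2. rewrite FS_kS in H2 by lra. apply Rmult_integral in H2. destruct H2; lra. Qed.

Lemma part_iv p : (5 <= p)%nat ->
  ((exists! lam : R, INR p < lam < INR p + 2 /\ F_A p lam = 0) /\
   (forall lam : R, (4 < lam <= INR p \/ INR p + 2 <= lam) -> F_A p lam <> 0)) /\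
  ((exists! lam : R, INR p < lam < INR p + 2 /\ F_S p lam = 0) /\
   (forall lam : R, (4 < lam <= INR p \/ INR p + 2 <= lam) -> F_S p lam <> 0)).
Proof.
  intros Hp. pose proof (INR_p5 p Hp) as HP.
  assert (HA : INR p + 1 < lamA p < INR p + 2).
  { unfold lamA. assert (0 < 1 / (INR p - 1)) by (apply Rdiv_lt_0_compat; lra).
    assert (1 / (INR p - 1) < 1) by (apply Rmult_lt_reg_r with (INR p - 1); [lra|]; unfold Rdiv; rewrite Rmult_assoc, Rinv_l by lra; lra).
    lra. }
  split; split.
  - exists (lamA p). split; [split; [lra|apply FA_at; assumption]|].
    intros x [Hx Hf]. symmetry. apply FA_root; auto; lra.
  - intros lam Hl Hf. assert (lam = lamA p) by (apply FA_root; auto; lra). lra.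
  - destruct (kS_exists p Hp) as [z [Hz Hf]]. exists z. split; [split; assumption|].
    intros x [Hx Hfx]. apply FS_zero_kS in Hf; [|lra]. apply FS_zero_kS in Hfx; [|lra].
    destruct (Rtotal_order z x) as [H|[H|H]]; [|assumption|].
    + pose proof (kS_strict p z x Hp ltac:(lra) H). lra.
    + pose proof (kS_strict p x z Hp ltac:(lra) H). lra.
  - intros lam Hl Hf. apply FS_zero_kS in Hf; [|lra].
    destruct Hl as [Hl|Hl].
    + pose proof (kS_p p Hp). destruct (Req_dec lam (INR p)) as [E|E]; [subst; lra|].
      pose proof (kS_strict p lam (INR p) Hp ltac:(lra) ltac:(lra)). lra.
    + pose proof (kS_p2 p Hp). destruct (Req_dec lam (INR p + 2)) as [E|E]; [subst; lra|].
      pose proof (kS_strict p (INR p + 2) lam Hp ltac:(lra) ltac:(lra)). lra.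
Qed.


Lemma interior_const p v : (5 <= p)%nat -> in_EKperp p v ->
  forall j, (- Z.of_nat p + 2 <= j <= -1)%Z -> v j = v (-1)%Z.
Proof.
  intros Hp [_ Hk] j Hj.
  destruct (Z.eq_dec j (-1)) as [E|E]; [subst; reflexivity|].
  set (k := Z.to_nat (- j)).
  assert (Hkj : j = (- Z.of_nat k)%Z) by (unfold k; lia).
  assert (Hk2 : (2 <= k <= p - 2)%nat) by (unfold k; lia).
  pose proof (Hk _ (EK_delta p k Hk2)) as H. rewrite (ip_delta p v k Hk2) in H.
  rewrite Hkj. lra.
Qed.

Lemma right_tail p v lam : (5 <= p)%nat -> 4 < lam -> is_eigvec p v lam ->
  forall n : nat, v (Z.of_nat n) = v 0%Z * (sigma_plus lam)^n.
Proof.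
  intros Hp Hl [[Hl2 _] [_ Heig]]. destruct (sigma_facts lam Hl) as [Hq Hb].
  apply (tail (fun n => v (Z.of_nat n)) (sigma_plus lam) (2 - lam) Hq Hb).
  - intros n. pose proof (Lap_pos p v (Z.of_nat (S n)) Hp ltac:(lia)) as E.
    rewrite Heig in E.
    replace (Z.of_nat (S n) - 1)%Z with (Z.of_nat n) in E by lia.
    replace (Z.of_nat (S n) + 1)%Z with (Z.of_nat (S (S n))) in E by lia. lra.
  - apply ex_series_lim_0. exact Hl2.
Qed.

Lemma left_tail p v lam : (5 <= p)%nat -> 4 < lam -> is_eigvec p v lam ->
  forall n : nat, v (- Z.of_nat p + 1 - Z.of_nat n)%Z = v (- Z.of_nat p + 1)%Z * (sigma_plus lam)^n.
Proof.
  intros Hp Hl [[_ Hl2] [_ Heig]]. destruct (sigma_facts lam Hl) as [Hq Hb].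
  intros n.
  rewrite (tail (fun n => v (- Z.of_nat p + 1 - Z.of_nat n)%Z) (sigma_plus lam) (2 - lam) Hq Hb).
  - simpl. rewrite Z.sub_0_r. reflexivity.
  - intros m. pose proof (Lap_neg p v (- Z.of_nat p + 1 - Z.of_nat (S m))%Z Hp ltac:(lia)) as E.
    rewrite Heig in E.
    replace (- Z.of_nat p + 1 - Z.of_nat (S m) - 1)%Z with (- Z.of_nat p + 1 - Z.of_nat (S (S m)))%Z in E by lia.
    replace (- Z.of_nat p + 1 - Z.of_nat (S m) + 1)%Z with (- Z.of_nat p + 1 - Z.of_nat m)%Z in E by lia. lra.
  - apply ex_series_lim_0 in Hl2.
    apply (is_lim_seq_incr_n _ (p - 2)) in Hl2.
    eapply is_lim_seq_ext; [|exact Hl2]. intros m. cbv beta.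
    replace (- Z.of_nat (m + (p - 2)) - 1)%Z with (- Z.of_nat p + 1 - Z.of_nat m)%Z by lia. reflexivity.
Qed.

Lemma core p v lam : (5 <= p)%nat -> 4 < lam -> is_eigvec p v lam -> in_EKperp p v ->
  (v 0%Z - v (- Z.of_nat p + 1)%Z) * F_A p lam = 0 /\
  v (-1)%Z * F_S p lam = 0 /\
  (2 - lam) * v (-1)%Z = v 0%Z + v (- Z.of_nat p + 1)%Z.
Proof.
  intros Hp Hl He Hk.
  pose proof (interior_const p v Hp Hk) as Hc.
  pose proof (right_tail p v lam Hp Hl He 1) as R1.
  pose proof (left_tail p v lam Hp Hl He 1) as L1.
  destruct He as [_ [_ Heig]].
  pose proof (Lap_0 p v _ Hp Hc) as E0. rewrite Heig in E0.
  pose proof (Lap_1 p v _ Hp Hc) as E1. rewrite Heig in E1.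
  pose proof (Lap_int p v _ (-1)%Z Hp Hc ltac:(lia)) as EI. rewrite Heig in EI.
  replace (- Z.of_nat p + 1 - Z.of_nat 1)%Z with (- Z.of_nat p)%Z in L1 by lia.
  change (Z.of_nat 1) with 1%Z in R1.
  rewrite R1 in E0. rewrite L1 in E1. simpl in E0, E1.
  set (a := v 0%Z) in *. set (b := v (- Z.of_nat p + 1)%Z) in *. set (c := v (-1)%Z) in *.
  set (s := sigma_plus lam) in *.
  assert (X3 : (2 - lam) * c = a + b) by lra.
  split; [|split; [|exact X3]].
  - unfold F_A. fold s. nra.
  - unfold F_S. fold s.
    assert (X : (a + b) * (INR p - 1 - s - lam) = 2 * (INR p - 2) * c) by nra.
    replace (c * ((2 - lam) * s - (INR p - 1 - lam) * (2 - lam) + 2 * (INR p - 2)))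
      with (((2 - lam) * c) * (s - (INR p - 1 - lam)) + 2 * (INR p - 2) * c) by ring.
    rewrite X3. nra.
Qed.

Lemma all_zero p v lam : (5 <= p)%nat -> 4 < lam -> is_eigvec p v lam -> in_EKperp p v ->
  v 0%Z = 0 -> v (- Z.of_nat p + 1)%Z = 0 -> v (-1)%Z = 0 -> False.
Proof.
  intros Hp Hl He Hk H0 H1 H2.
  pose proof (interior_const p v Hp Hk) as Hc.
  pose proof (right_tail p v lam Hp Hl He) as R.
  pose proof (left_tail p v lam Hp Hl He) as L.
  destruct He as [_ [[i Hi] _]]. apply Hi.
  destruct (Z_le_gt_dec 0 i).
  - replace i with (Z.of_nat (Z.to_nat i)) by lia. rewrite R, H0. ring.
  - destruct (Z_le_gt_dec i (- Z.of_nat p + 1)).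
    + replace i with (- Z.of_nat p + 1 - Z.of_nat (Z.to_nat (- Z.of_nat p + 1 - i)))%Z by lia. rewrite L, H1. ring.
    + rewrite Hc by lia. exact H2.
Qed.

Lemma sym_of p v lam : (5 <= p)%nat -> 4 < lam -> is_eigvec p v lam ->
  v (- Z.of_nat p + 1)%Z = v 0%Z -> symmetric p v.
Proof.
  intros Hp Hl He E n Hn. replace n with (Z.of_nat (Z.to_nat n)) by lia.
  rewrite (left_tail p v lam Hp Hl He), (right_tail p v lam Hp Hl He), E. reflexivity.
Qed.

Lemma antisym_of p v lam : (5 <= p)%nat -> 4 < lam -> is_eigvec p v lam ->
  v (- Z.of_nat p + 1)%Z = - v 0%Z -> antisymmetric p v.
Proof.
  intros Hp Hl He E n Hn. replace n with (Z.of_nat (Z.to_nat n)) by lia.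
  rewrite (left_tail p v lam Hp Hl He), (right_tail p v lam Hp Hl He), E. ring.
Qed.

Lemma FA_FS p lam : (5 <= p)%nat -> 4 < lam -> F_A p lam = 0 -> F_S p lam <> 0.
Proof.
  intros Hp Hl HA. pose proof (FA_root p lam Hp Hl HA) as E.
  pose proof (INR_p5 p Hp).
  assert (INR p + 1 < lam).
  { rewrite E. unfold lamA. assert (0 < 1 / (INR p - 1)) by (apply Rdiv_lt_0_compat; lra). lra. }
  unfold F_A in HA. unfold F_S. replace (sigma_plus lam) with (INR p + 1 - lam) by lra.
  intros HS. nra.
Qed.

Lemma part_i p v lam : (5 <= p)%nat -> 4 < lam -> is_eigvec p v lam -> in_EKperp p v ->
  symmetric p v \/ antisymmetric p v.
Proof.
  intros Hp Hl He Hk. destruct (core p v lam Hp Hl He Hk) as [C1 [C2 C3]].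
  destruct (Req_dec (F_A p lam) 0) as [FA|FA].
  - right. apply (antisym_of p v lam Hp Hl He).
    pose proof (FA_FS p lam Hp Hl FA).
    apply Rmult_integral in C2. destruct C2 as [C2|C2]; [|contradiction].
    rewrite C2 in C3. lra.
  - left. apply (sym_of p v lam Hp Hl He).
    apply Rmult_integral in C1. destruct C1; [lra|contradiction].
Qed.

Lemma part_ii_fwd p v lam : (5 <= p)%nat -> 4 < lam -> is_eigvec p v lam -> in_EKperp p v ->
  symmetric p v -> F_S p lam = 0.
Proof.
  intros Hp Hl He Hk Hs. destruct (core p v lam Hp Hl He Hk) as [C1 [C2 C3]].
  destruct (Req_dec (F_S p lam) 0) as [|FS]; [assumption|exfalso].
  pose proof (Hs 0%Z ltac:(lia)) as E. rewrite Z.sub_0_r in E.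
  apply Rmult_integral in C2. destruct C2 as [C2|C2]; [|contradiction].
  apply (all_zero p v lam Hp Hl He Hk); try assumption; rewrite C2 in C3; lra.
Qed.

Lemma part_iii_fwd p v lam : (5 <= p)%nat -> 4 < lam -> is_eigvec p v lam -> in_EKperp p v ->
  antisymmetric p v -> F_A p lam = 0.
Proof.
  intros Hp Hl He Hk Hs. destruct (core p v lam Hp Hl He Hk) as [C1 [C2 C3]].
  destruct (Req_dec (F_A p lam) 0) as [|FA]; [assumption|exfalso].
  pose proof (Hs 0%Z ltac:(lia)) as E. rewrite Z.sub_0_r in E.
  apply Rmult_integral in C1. destruct C1 as [C1|C1]; [|contradiction].
  assert (v 0%Z = 0) by lra.
  assert (v (-1)%Z = 0) by nra.
  apply (all_zero p v lam Hp Hl He Hk); lra.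
Qed.


Definition mk (p : nat) (a b c s : R) (j : Z) : R :=
  if (0 <=? j)%Z then a * s ^ (Z.to_nat j)
  else if (j <=? - Z.of_nat p + 1)%Z then b * s ^ (Z.to_nat (- Z.of_nat p + 1 - j)) else c.

Lemma mk_pos p a b c s n : mk p a b c s (Z.of_nat n) = a * s ^ n.
Proof. unfold mk. destruct (Z.leb_spec 0 (Z.of_nat n)); [|lia]. rewrite Nat2Z.id. reflexivity. Qed.

Lemma mk_neg p a b c s n : (2 <= p)%nat -> mk p a b c s (- Z.of_nat p + 1 - Z.of_nat n)%Z = b * s ^ n.
Proof.
  intros. unfold mk. destruct (Z.leb_spec 0 (- Z.of_nat p + 1 - Z.of_nat n)); [lia|].
  destruct (Z.leb_spec (- Z.of_nat p + 1 - Z.of_nat n) (- Z.of_nat p + 1)); [|lia].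
  replace (- Z.of_nat p + 1 - (- Z.of_nat p + 1 - Z.of_nat n))%Z with (Z.of_nat n) by lia.
  rewrite Nat2Z.id. reflexivity.
Qed.

Lemma mk_int p a b c s j : (- Z.of_nat p + 2 <= j <= -1)%Z -> mk p a b c s j = c.
Proof.
  intros. unfold mk. destruct (Z.leb_spec 0 j); [lia|].
  destruct (Z.leb_spec j (- Z.of_nat p + 1)); [lia|]. reflexivity.
Qed.

Lemma geom_sq (x : R) (s : R) : -1 < s < 0 -> ex_series (fun n => (x * s ^ n)^2).
Proof.
  intros Hs.
  assert (Hq : Rabs (s^2) < 1) by (rewrite Rabs_right; nra).
  pose proof (ex_series_scal (x^2) _ (ex_intro _ _ (is_series_geom _ Hq))) as H.
  assert (E : forall n, (x * s ^ n)^2 = x^2 * (s^2)^n).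
  { intros n. rewrite <- pow_mult, Nat.mul_comm, pow_mult. ring. }
  eapply ex_series_ext; [|exact H]. intros n; cbv beta. rewrite E. reflexivity.
Qed.

Lemma mk_good p lam a b c : (5 <= p)%nat -> 4 < lam -> a <> 0 ->
  (a - sigma_plus lam * a) + (a - b) + (INR p - 2) * (a - c) = lam * a ->
  (b - sigma_plus lam * b) + (b - a) + (INR p - 2) * (b - c) = lam * b ->
  (c - a) + (c - b) = lam * c ->
  is_eigvec p (mk p a b c (sigma_plus lam)) lam /\ in_EKperp p (mk p a b c (sigma_plus lam)).
Proof.
  intros Hp Hl Ha E0 E1 EI. destruct (sigma_facts lam Hl) as [Hq Hb].
  set (s := sigma_plus lam) in *. set (v := mk p a b c s).
  assert (Hc : forall j, (- Z.of_nat p + 2 <= j <= -1)%Z -> v j = c) by (intros; apply mk_int; assumption).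
  assert (Hl2 : in_l2 v).
  { split.
    - eapply ex_series_ext; [|exact (geom_sq a s Hb)]. intros n; cbv beta. unfold v. rewrite mk_pos. reflexivity.
    - apply (ex_series_incr_n _ (p - 2)).
      eapply ex_series_ext; [|exact (geom_sq b s Hb)]. intros n; cbv beta. unfold v.
      replace (- Z.of_nat (p - 2 + n) - 1)%Z with (- Z.of_nat p + 1 - Z.of_nat n)%Z by lia.
      rewrite mk_neg by lia. reflexivity. }
  split; [split; [exact Hl2|split]|split; [exact Hl2|]].
  - exists 0%Z. unfold v. change 0%Z with (Z.of_nat 0). rewrite mk_pos. simpl. lra.
  - intros i.
    assert (Hv0 : v 0%Z = a) by (unfold v; change 0%Z with (Z.of_nat 0); rewrite mk_pos; simpl; ring).
    assert (Hv1 : v 1%Z = a * s) by (unfold v; change 1%Z with (Z.of_nat 1); rewrite mk_pos; simpl; ring).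
    assert (HvP : v (- Z.of_nat p + 1)%Z = b).
    { unfold v. replace (- Z.of_nat p + 1)%Z with (- Z.of_nat p + 1 - Z.of_nat 0)%Z by lia. rewrite mk_neg by lia. simpl; ring. }
    assert (HvP1 : v (- Z.of_nat p)%Z = b * s).
    { unfold v. replace (- Z.of_nat p)%Z with (- Z.of_nat p + 1 - Z.of_nat 1)%Z by lia. rewrite mk_neg by lia. simpl; ring. }
    destruct (Z_le_gt_dec 1 i).
    + rewrite Lap_pos by assumption.
      replace i with (Z.of_nat (S (Z.to_nat i - 1))) by lia. set (m := (Z.to_nat i - 1)%nat).
      replace (Z.of_nat (S m) - 1)%Z with (Z.of_nat m) by lia.
      replace (Z.of_nat (S m) + 1)%Z with (Z.of_nat (S (S m))) by lia.
      unfold v; rewrite !mk_pos. simpl.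
      apply Rminus_diag_uniq.
      match goal with |- ?L = 0 => replace L with (- a * s ^ m * (s^2 - (2 - lam) * s + 1)) by ring end.
      rewrite Hq. ring.
    + destruct (Z.eq_dec i 0) as [->|Hi0].
      { rewrite (Lap_0 p v c Hp Hc), Hv0, Hv1, HvP. lra. }
      destruct (Z_le_gt_dec i (- Z.of_nat p)).
      * rewrite Lap_neg by assumption.
        replace i with (- Z.of_nat p + 1 - Z.of_nat (S (Z.to_nat (- Z.of_nat p - i))))%Z by lia.
        set (m := Z.to_nat (- Z.of_nat p - i)).
        replace (- Z.of_nat p + 1 - Z.of_nat (S m) - 1)%Z with (- Z.of_nat p + 1 - Z.of_nat (S (S m)))%Z by lia.
        replace (- Z.of_nat p + 1 - Z.of_nat (S m) + 1)%Z with (- Z.of_nat p + 1 - Z.of_nat m)%Z by lia.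
        unfold v; rewrite !mk_neg by lia. simpl.
        apply Rminus_diag_uniq.
        match goal with |- ?L = 0 => replace L with (- b * s ^ m * (s^2 - (2 - lam) * s + 1)) by ring end.
        rewrite Hq. ring.
      * destruct (Z.eq_dec i (- Z.of_nat p + 1)) as [->|Hi1].
        { rewrite (Lap_1 p v c Hp Hc), Hv0, HvP1, HvP. lra. }
        rewrite (Lap_int p v c i Hp Hc) by lia. rewrite Hv0, HvP, Hc by lia. lra.
  - intros w Hw. apply (ip_EK p v w c Hc Hw).
Qed.

Lemma part_ii_bwd p lam : (5 <= p)%nat -> 4 < lam -> F_S p lam = 0 ->
  exists v, is_eigvec p v lam /\ in_EKperp p v /\ symmetric p v.
Proof.
  intros Hp Hl HF. pose proof (INR_p5 p Hp).
  set (c := 2 / (2 - lam)).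
  assert (Hc : (2 - lam) * c = 2) by (unfold c; field; lra).
  unfold F_S in HF. set (s := sigma_plus lam) in *.
  destruct (mk_good p lam 1 1 c Hp Hl ltac:(lra)) as [He Hk].
  - fold s. apply (Rmult_eq_reg_l (2 - lam)); [|lra].
    apply Rminus_diag_uniq.
    match goal with |- ?L = 0 => replace L with (- ((2 - lam) * s - (INR p - 1 - lam) * (2 - lam) + 2 * (INR p - 2)) - (INR p - 2) * ((2 - lam) * c - 2)) by ring end.
    rewrite HF, Hc. ring.
  - fold s. apply (Rmult_eq_reg_l (2 - lam)); [|lra].
    apply Rminus_diag_uniq.
    match goal with |- ?L = 0 => replace L with (- ((2 - lam) * s - (INR p - 1 - lam) * (2 - lam) + 2 * (INR p - 2)) - (INR p - 2) * ((2 - lam) * c - 2)) by ring end.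
    rewrite HF, Hc. ring.
  - lra.
  - exists (mk p 1 1 c (sigma_plus lam)). split; [exact He|split; [exact Hk|]].
    intros n Hn. replace n with (Z.of_nat (Z.to_nat n)) by lia. rewrite mk_neg, mk_pos by lia. reflexivity.
Qed.

Lemma part_iii_bwd p lam : (5 <= p)%nat -> 4 < lam -> F_A p lam = 0 ->
  exists v, is_eigvec p v lam /\ in_EKperp p v /\ antisymmetric p v.
Proof.
  intros Hp Hl HF. unfold F_A in HF.
  destruct (mk_good p lam 1 (-1) 0 Hp Hl ltac:(lra)) as [He Hk]; [lra|lra|lra|].
  exists (mk p 1 (-1) 0 (sigma_plus lam)). split; [exact He|split; [exact Hk|]].
  intros n Hn. replace n with (Z.of_nat (Z.to_nat n)) by lia. rewrite mk_neg, mk_pos by lia. ring.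
Qed.


Theorem proposition11 (p : nat) (Hp : (5 <= p)%nat) :
  (* (i) *)
  (forall (v : vec) (lam : R), 4 < lam -> is_eigvec p v lam -> in_EKperp p v ->
     symmetric p v \/ antisymmetric p v) /\
  (* (ii) *)
  (forall lam : R, 4 < lam ->
     ((exists v : vec, is_eigvec p v lam /\ in_EKperp p v /\ symmetric p v)
      <-> F_S p lam = 0)) /\
  (* (iii) *)
  (forall lam : R, 4 < lam ->
     ((exists v : vec, is_eigvec p v lam /\ in_EKperp p v /\ antisymmetric p v)
      <-> F_A p lam = 0)) /\
  (* (iv) *)
  ((exists! lam : R, INR p < lam < INR p + 2 /\ F_A p lam = 0) /\
   (forall lam : R, (4 < lam <= INR p \/ INR p + 2 <= lam) -> F_A p lam <> 0)) /\
  ((exists! lam : R, INR p < lam < INR p + 2 /\ F_S p lam = 0) /\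
   (forall lam : R, (4 < lam <= INR p \/ INR p + 2 <= lam) -> F_S p lam <> 0)).
Proof.
  split; [|split; [|split]].
  - intros v lam Hl He Hk. exact (part_i p v lam Hp Hl He Hk).
  - intros lam Hl. split.
    + intros [v [He [Hk Hs]]]. exact (part_ii_fwd p v lam Hp Hl He Hk Hs).
    + intros HF. exact (part_ii_bwd p lam Hp Hl HF).
  - intros lam Hl. split.
    + intros [v [He [Hk Hs]]]. exact (part_iii_fwd p v lam Hp Hl He Hk Hs).
    + intros HF. exact (part_iii_bwd p lam Hp Hl HF).
  - exact (part_iv p Hp).
Qed.
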